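(* As formal power series in $x$, $$\widehat B_1(x):=\frac{1}{\beta_1}\sum_{n\ge0}\beta_{n+1}x^n=\cfrac{1}{1+\cfrac{c_1x}{1+\cfrac{c_2x}{1+\cfrac{c_3x}{\ddots}}}}$$ where for $n\ge1$, $c_{2n-1}=\dfrac{q^n[n]_q^2[n+1]_q}{[2n]_q[2n+1]_q}$ and $c_{2n}=-\dfrac{[n]_q[n+1]_q^2}{[2n+1]_q[2n+2]_q}$.
   Context: $q$ is an indeterminate. The $q$-Bernoulli–Carlitz numbers $\beta_n\in\mathbb{Q}(q)$ are defined by: for all $n\ge0$, $q\sum_{k=0}^{n}\binom{n}{k}q^k\beta_k-\beta_n$ equals $q-1$ if $n=0$, $1$ if $n=1$, and $0$ if $n>1$ (so $\beta_1=-1/(q+1)$). $[m]_q=(q^m-1)/(q-1)$. *)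

(* Defs.v *)
From HB Require Import structures.
From mathcomp Require Import all_boot all_order all_algebra fraction.
Set Implicit Arguments. Unset Strict Implicit. Unset Printing Implicit Defensive.
Import Order.TTheory GRing.Theory Num.Theory.
Local Open Scope ring_scope.

Definition Qq : fieldType := {fraction {poly rat}}.
Definition qv : Qq := tofrac ('X : {poly rat}).

Definition qint (m : nat) : Qq := (qv ^+ m - 1) / (qv - 1).

(* The continued-fraction coefficients c_k (k >= 1; c_0 unused):
   c_{2n-1} = q^n [n]^2 [n+1] / ([2n][2n+1]),
   c_{2n}   = - [n][n+1]^2 / ([2n+1][2n+2]). *)
Definition cf_coef (k : nat) : Qq :=
  if odd k then
    let n := k.+1./2 in
    qv ^+ n * qint n ^+ 2 * qint n.+1 / (qint n.*2 * qint n.*2.+1)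
  else
    let n := k./2 in
    - (qint n * qint n.+1 ^+ 2 / (qint n.*2.+1 * qint n.*2.+2)).

Section Series.
Variable K : fieldType.
Definition series := nat -> K.

Definition ps_one : series := fun n => (n == 0)%:R.

Definition ps_one_plus_cx (c : K) (g : series) : series :=
  fun n => if n is m.+1 then c * g m else 1.

Fixpoint ps_inv_list (a : series) (n : nat) : seq K :=
  match n with
  | 0 => [:: (a 0)^-1]
  | n'.+1 => let l := ps_inv_list a n' in
             rcons l (- (a 0)^-1 * \sum_(1 <= i < n.+1) a i * nth 0 l (n - i))
  end.

Definition ps_inv (a : series) : series := fun n => nth 0 (ps_inv_list a n) n.

Fixpoint cf_tail (c : nat -> K) (k d : nat) : series :=
  match d with
  | 0 => ps_one
  | d'.+1 => ps_inv (ps_one_plus_cx (c k) (cf_tail c k.+1 d'))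
  end.

Definition cf_conv (c : nat -> K) (N : nat) : series := cf_tail c 1 N.

(* f equals the infinite continued fraction 1/(1+c_1x/(1+c_2x/...)) as a
   formal power series: the convergents converge to f in the x-adic
   topology, i.e. every coefficient of the convergents is eventually
   equal to the corresponding coefficient of f. *)
Definition cf_expands (c : nat -> K) (f : series) : Prop :=
  forall n, exists M, forall N, (M <= N)%N -> cf_conv c N n = f n.
End Series.

(* Main.v *)
Require Import Defs.
From HB Require Import structures.
From mathcomp Require Import all_boot all_order all_algebra fraction.
From mathcomp Require Import ring zify.
Import GRing.Theory.
Local Open Scope ring_scope.

Module PartC.

Lemma id1 (R : comNzRingType) (x C G S1 : R) : (1 + C * (x * G)) * S1 = S1 - x * (G * S1 * (- C)).
Proof. ring. Qed.
Lemma id2 (R : comNzRingType) (C S1 S2 : R) : S1 - (S1 + C * S2) = S2 * (- C).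
Proof. ring. Qed.

Section PS.
Variable K : fieldType.

Definition tr (n : nat) (a : series K) : {poly K} := \poly_(i < n) a i.

Definition agree (M : nat) (P Q : {poly K}) := forall i, (i < M)%N -> P`_i = Q`_i.

Lemma agree_refl M P : agree M P P. Proof. by []. Qed.
Lemma agree_sym M P Q : agree M P Q -> agree M Q P.
Proof. by move=> h i hi; rewrite h. Qed.
Lemma agree_trans M P Q R : agree M P Q -> agree M Q R -> agree M P R.
Proof. by move=> h1 h2 i hi; rewrite h1 // h2. Qed.
Lemma agree_le M N P Q : (N <= M)%N -> agree M P Q -> agree N P Q.
Proof. by move=> hNM h i hi; apply: h; apply: leq_trans hNM. Qed.
Lemma agreeD M P Q P' Q' : agree M P Q -> agree M P' Q' -> agree M (P + P') (Q + Q').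
Proof. by move=> h1 h2 i hi; rewrite !coefD h1 // h2. Qed.
Lemma agreeN M P Q : agree M P Q -> agree M (- P) (- Q).
Proof. by move=> h i hi; rewrite !coefN h. Qed.
Lemma agreeMl M R P Q : agree M P Q -> agree M (R * P) (R * Q).
Proof.
move=> h i hi; rewrite !coefM; apply: eq_bigr => j _; rewrite h //.
by apply: leq_ltn_trans hi; apply: leq_subr.
Qed.
Lemma agreeMr M R P Q : agree M P Q -> agree M (P * R) (Q * R).
Proof. by move=> h; rewrite ![_ * R]mulrC; apply: agreeMl. Qed.
Lemma agreeX M P Q : agree M P Q -> agree M.+1 ('X * P) ('X * Q).
Proof. by move=> h [|i] hi; rewrite !coefXM //=; apply: h. Qed.

Arguments agree_trans [M P Q R].
Arguments agree_sym [M P Q].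
Arguments agreeD [M P Q P' Q'].
Arguments agreeN [M P Q].
Arguments agreeMl [M] R [P Q].
Arguments agreeMr [M] R [P Q].
Arguments agreeX [M P Q].

Lemma coef_tr n a i : (tr n a)`_i = if (i < n)%N then a i else 0.
Proof. by rewrite /tr coef_poly. Qed.

Lemma agree_tr M N N' a : (M <= N)%N -> (M <= N')%N -> agree M (tr N a) (tr N' a).
Proof.
move=> h1 h2 i hi; rewrite !coef_tr (leq_trans hi h1) (leq_trans hi h2) //.
Qed.

Lemma size_inv_list (a : series K) n : size (ps_inv_list a n) = n.+1.
Proof. by elim: n => //= n IH; rewrite size_rcons IH. Qed.

Lemma nth_inv_list (a : series K) n i : (i <= n)%N -> nth 0 (ps_inv_list a n) i = ps_inv a i.
Proof.
elim: n => [|n IH] hi; first by rewrite leqn0 in hi; rewrite (eqP hi).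
rewrite leq_eqVlt in hi; case/orP: hi => [/eqP->|hi] //.
rewrite /= nth_rcons size_inv_list hi IH //.
Qed.

Lemma ps_inv_S (a : series K) n : ps_inv a n.+1 =
  - (a 0)^-1 * \sum_(1%N <= i < n.+2) a i * ps_inv a (n.+1 - i)%N.
Proof.
rewrite /ps_inv /= nth_rcons size_inv_list ltnn eqxx; congr (_ * _).
rewrite !big_nat; apply: eq_bigr => i /andP [h1 h2].
rewrite nth_inv_list //.
by rewrite leq_subLR; move: h1 h2; clear; lia.
Qed.

Lemma ps_inv_0 (a : series K) : ps_inv a 0 = (a 0)^-1.
Proof. by []. Qed.



Lemma agree_opc M (c : K) (g : series K) : agree M.+1 (tr M.+1 (ps_one_plus_cx c g)) (1 + c%:P * ('X * tr M g)).
Proof.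
move=> [|i] hi; rewrite coef_tr hi coefD coefC coefCM coefXM /=.
  by rewrite mulr0 addr0.
by rewrite coef_tr; rewrite ltnS in hi; rewrite hi add0r.
Qed.

Lemma tr_one M : agree M (tr M (ps_one K)) 1.
Proof. by move=> [|i] hi; rewrite coef_tr hi coefC. Qed.

Variable c : nat -> K.
Variable f : series K.
Variable S : nat -> series K.
Hypothesis HS0 : forall j, S 0 j = f j.
Hypothesis HS1 : forall j, S 1 j = f j.+1.
Hypothesis Hf0 : f 0 = 1.
Hypothesis HSrec : forall k j, S k.+2 j = S k.+1 j.+1 + c k.+1 * S k j.+1.
Hypothesis HSc : forall k, S k.+1 0 + c k.+1 * S k 0 = 0.

Lemma agree_Srec M k : agree M ('X * tr M (S k.+2)) (tr M (S k.+1) + (c k.+1)%:P * tr M (S k)).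
Proof.
move=> [|i] hi; rewrite coefXM coefD coefCM !coef_tr hi /=.
  by rewrite HSc.
by rewrite HSrec (ltn_trans (ltnSn i) hi).
Qed.

Lemma agree_S1 M : agree M ('X * tr M (S 1)) (tr M f - 1).
Proof.
move=> [|i] hi; rewrite coefXM coefB coefC !coef_tr hi /=.
  by rewrite Hf0 subrr.
by rewrite HS1 (ltn_trans (ltnSn i) hi) subr0.
Qed.

Lemma S_const_nz k : S k 0 != 0 -> (forall k, c k.+1 != 0) -> S k.+1 0 != 0.
Proof.
move=> h hc; have := HSc k; move/eqP; rewrite addr_eq0 => /eqP ->.
by rewrite oppr_eq0 mulf_neq0.
Qed.

Hypothesis Hc : forall k, c k.+1 != 0.

Lemma Snz k : S k 0 != 0.
Proof.
elim: k => [|k IH]; first by rewrite HS0 Hf0 oner_neq0.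
exact: S_const_nz.
Qed.

Lemma ps_inv_conv (a : series K) n : a 0 != 0 ->
  \sum_(i < n.+1) a i * ps_inv a (n - i)%N = (n == 0%N)%:R.
Proof.
move=> ha; case: n => [|n].
  by rewrite big_ord1 subnn ps_inv_0 mulfV.
rewrite big_ord_recl /= subn0 ps_inv_S mulrA mulrN mulfV // mulN1r.
rewrite big_add1 /= big_mkord.
by rewrite addNr.
Qed.

Lemma agree_inv M (a : series K) : a 0 != 0 -> agree M (tr M a * tr M (ps_inv a)) 1.
Proof.
move=> ha i hi; rewrite coefM coefC.
have -> : (if i == 0%N then 1 else 0) = (i == 0%N)%:R :> K by case: (i == 0%N).
rewrite -(ps_inv_conv a i ha); apply: eq_bigr => j _.
rewrite !coef_tr (leq_ltn_trans (leq_ord j) hi).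
by rewrite (leq_ltn_trans (leq_subr _ _) hi).
Qed.

Lemma opc0 (cc : K) (g : series K) : ps_one_plus_cx cc g 0 != 0.
Proof. by rewrite /= oner_neq0. Qed.

Lemma tail_main d : forall k,
  agree d.+1 (tr d.+1 (cf_tail c k.+2 d) * tr d.+1 (S k) * (- c k.+1)%:P)
             (tr d.+1 (S k.+1)).
Proof.
elim: d => [|d IH] k.
  move=> [|i] hi //=; rewrite !coefMC coefM big_ord1 !coef_tr /=.
  have := HSc k; move/eqP; rewrite addr_eq0 => /eqP ->.
  by rewrite /ps_one /= mul1r subnn mulrN mulrC.
set g := cf_tail c k.+3 d.
set A := tr d.+2 (ps_one_plus_cx (c k.+2) g).
set I := tr d.+2 (cf_tail c k.+2 d.+1).
set S2 := tr d.+2 (S k); set S1 := tr d.+2 (S k.+1); set Sk := tr d.+2 (S k.+2).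
set G := tr d.+2 g.
have hAI : agree d.+2 (A * I) 1 by apply: agree_inv; apply: opc0.
have hA : agree d.+2 A (1 + (c k.+2)%:P * ('X * G)).
  apply: agree_trans (agree_opc _ _ _) _.
  apply: agreeD => //; apply: agreeMl; apply: agreeX; apply: agree_tr => //.
have IH' : agree d.+1 (G * S1 * (- c k.+2)%:P) Sk.
  have h := IH k.+1.
  have t1 : agree d.+1 (tr d.+1 (S k.+2)) Sk by apply: agree_tr.
  apply: agree_trans _ (agree_trans h t1).
  apply: agreeMr.
  have t2 : agree d.+1 S1 (tr d.+1 (S k.+1)) by apply: agree_tr.
  have t3 : agree d.+1 G (tr d.+1 g) by apply: agree_tr.
  apply: agree_trans (agreeMl G t2) _.
  exact: agreeMr t3.
have hAS : agree d.+2 (A * S1) (S2 * (- c k.+1)%:P).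
  apply: agree_trans (agreeMr _ hA) _.
  rewrite polyCN id1; rewrite polyCN in IH'.
  apply: agree_trans (agreeD (agree_refl _ S1) (agreeN (agreeX IH'))) _.
  apply: agree_trans (agreeD (agree_refl _ S1) (agreeN (agree_Srec _ k))) _.
  by rewrite id2.
have e2 : I * S2 * (- c k.+1)%:P = I * (S2 * (- c k.+1)%:P) by rewrite mulrA.
rewrite e2.
apply: agree_trans (agreeMl _ (agree_sym hAS)) _.
rewrite mulrA [I * A]mulrC.
apply: agree_trans (agreeMr _ hAI) _.
by rewrite mul1r.
Qed.

Lemma tail_one d : agree d.+1 (tr d.+1 (cf_tail c 1 d)) (tr d.+1 f).
Proof.
case: d => [|d].
  by move=> [|i] hi //=; rewrite !coef_tr /= Hf0.
set g := cf_tail c 2 d.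
set A := tr d.+2 (ps_one_plus_cx (c 1) g).
set I := tr d.+2 (cf_tail c 1 d.+1).
set F := tr d.+2 f; set S1 := tr d.+2 (S 1); set S0 := tr d.+2 (S 0).
set G := tr d.+2 g.
have eS0 : S0 = F by apply/polyP => i; rewrite /S0 /F !coef_tr HS0.
have hAI : agree d.+2 (A * I) 1 by apply: agree_inv; apply: opc0.
have hA : agree d.+2 A (1 + (c 1)%:P * ('X * G)).
  apply: agree_trans (agree_opc _ _ _) _.
  apply: agreeD => //; apply: agreeMl; apply: agreeX; apply: agree_tr => //.
have IH' : agree d.+1 (G * S0 * (- c 1)%:P) S1.
  have h := tail_main d 0.
  have t1 : agree d.+1 (tr d.+1 (S 1)) S1 by apply: agree_tr.
  apply: agree_trans _ (agree_trans h t1).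
  apply: agreeMr.
  have t2 : agree d.+1 S0 (tr d.+1 (S 0)) by apply: agree_tr.
  have t3 : agree d.+1 G (tr d.+1 g) by apply: agree_tr.
  apply: agree_trans (agreeMl G t2) _.
  exact: agreeMr t3.
have hAS : agree d.+2 (A * F) 1.
  apply: agree_trans (agreeMr _ hA) _.
  rewrite -eS0 id1; rewrite polyCN in IH'.
  apply: agree_trans (agreeD (agree_refl _ S0) (agreeN (agreeX IH'))) _.
  rewrite eS0.
  apply: agree_trans (agreeD (agree_refl _ F) (agreeN (agree_S1 _))) _.
  by rewrite opprB addrC subrK.
have : agree d.+2 (I * (A * F)) I.
  by move=> i hi; rewrite (agreeMl _ hAS) // mulr1.
rewrite mulrA [I * A]mulrC => h.
apply: agree_trans (agree_sym h) _.
apply: agree_trans (agreeMr _ hAI) _.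
by rewrite mul1r.
Qed.

Lemma cf_expands_S : cf_expands c f.
Proof.
move=> n; exists n => N hN.
have := tail_one N n; rewrite !coef_tr ltnS hN /cf_conv => -> //.
Qed.

End PS.

End PartC.
Import PartC.

Module Gen.
Set Implicit Arguments. Unset Strict Implicit.

Section Gen.
Variable F : fieldType.
Variable q : F.
Hypothesis hq : forall k, q ^+ k.+1 - 1 != 0.

Lemma hq1 : q - 1 != 0.
Proof. by have := hq 0; rewrite expr1. Qed.

Hypothesis hq0 : q != 0.

Definition qi (m : nat) : F := (q ^+ m - 1) / (q - 1).

Lemma qi_neq0 k : qi k.+1 != 0.
Proof. by rewrite /qi mulf_neq0 ?invr_eq0 ?hq ?hq1. Qed.

Lemma qi0 : qi 0 = 0.
Proof. by rewrite /qi expr0 subrr mul0r. Qed.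

Lemma qi1 : qi 1 = 1.
Proof. by rewrite /qi expr1 mulfV // hq1. Qed.

Lemma qiS k : qi k.+1 = qi k + q ^+ k.
Proof. rewrite /qi exprSr; have h := hq1; field; exact h. Qed.

Definition qf (k : nat) : F := \prod_(i < k) qi i.+1.

Lemma qfS k : qf k.+1 = qf k * qi k.+1.
Proof. by rewrite /qf big_ord_recr. Qed.

Lemma qf0 : qf 0 = 1.
Proof. by rewrite /qf big_ord0. Qed.

Lemma qf_neq0 k : qf k != 0.
Proof.
elim: k => [|k IH]; first by rewrite qf0 oner_neq0.
by rewrite qfS mulf_neq0 // qi_neq0.
Qed.

Definition cc (k : nat) : F :=
  if odd k then
    let n := k.+1./2 in
    q ^+ n * qi n ^+ 2 * qi n.+1 / (qi n.*2 * qi n.*2.+1)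
  else
    let n := k./2 in
    - (qi n * qi n.+1 ^+ 2 / (qi n.*2.+1 * qi n.*2.+2)).

End Gen.



End Gen.
Import Gen.

Module Gen2.
Set Implicit Arguments. Unset Strict Implicit.

Section L0.
Variable F : fieldType.
Variable q : F.
Variable beta : nat -> F.
Hypothesis Hbeta : forall n : nat,
     q * (\sum_(k < n.+1) 'C(n, k)%:R * q ^+ k * beta k) - beta n
     = (if n == 0%N then q - 1 else if n == 1%N then 1 else 0).

Definition L0 (p : {poly F}) : F := \sum_(i < size p) p`_i * beta i.

Lemma L0E n (p : {poly F}) : (size p <= n)%N -> L0 p = \sum_(i < n) p`_i * beta i.
Proof.
move=> h; rewrite /L0 (big_ord_widen n (fun i => p`_i * beta i) h).
rewrite big_mkcond; apply: eq_bigr => i _.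
case: ifP => // /negbT; rewrite -leqNgt => hi.
by rewrite nth_default // mul0r.
Qed.

Lemma L0D (p r : {poly F}) : L0 (p + r) = L0 p + L0 r.
Proof.
set n := maxn (size p) (size r).
rewrite (L0E (n:=n) (size_polyD _ _)) (L0E (n:=n) (leq_maxl _ _)) (L0E (n:=n) (leq_maxr _ _)).
rewrite -big_split; apply: eq_bigr => i _; by rewrite coefD mulrDl.
Qed.

Lemma L0Z (a : F) (p : {poly F}) : L0 (a *: p) = a * L0 p.
Proof.
rewrite (L0E (n:=size p) (size_scale_leq _ _)) /L0 mulr_sumr.
by apply: eq_bigr => i _; rewrite coefZ mulrA.
Qed.

Lemma L00 : L0 0 = 0.
Proof. by rewrite /L0 size_poly0 big_ord0. Qed.

Lemma L0N (p : {poly F}) : L0 (- p) = - L0 p.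
Proof. by rewrite -scaleN1r L0Z mulN1r. Qed.

Lemma L0B (p r : {poly F}) : L0 (p - r) = L0 p - L0 r.
Proof. by rewrite L0D L0N. Qed.

Lemma L0_sum I (s : seq I) (P : pred I) (G : I -> {poly F}) :
  L0 (\sum_(i <- s | P i) G i) = \sum_(i <- s | P i) L0 (G i).
Proof. exact: (big_morph L0 L0D L00). Qed.

Lemma L0_poly n (a : nat -> F) : L0 (\poly_(i < n) a i) = \sum_(i < n) a i * beta i.
Proof.
rewrite (L0E (size_poly _ _)); apply: eq_bigr => i _.
by rewrite coef_poly ltn_ord.
Qed.

Lemma L0Xn n : L0 'X^n = beta n.
Proof.
rewrite (L0E (n:=n.+1)); last by rewrite size_polyXn.
rewrite big_ord_recr /= big1 ?add0r ?coefXn ?eqxx ?mul1r //.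
by move=> i _; rewrite coefXn (ltn_eqF (ltn_ord i)) mul0r.
Qed.

Lemma L01 : L0 1 = beta 0.
Proof. by rewrite -(expr0 'X) L0Xn. Qed.

Lemma rpow i : (1 + q *: 'X) ^+ i = \poly_(k < i.+1) ('C(i, k)%:R * q ^+ k).
Proof.
rewrite addrC exprD1n poly_def; apply: eq_bigr => k _.
by rewrite exprZn scalerMnl -mulr_natl.
Qed.

Definition rhs (n : nat) : F := if n == 0%N then q - 1 else if n == 1%N then 1 else 0.

Lemma L0_rpow i : q * L0 ((1 + q *: 'X) ^+ i) - beta i = rhs i.
Proof. by rewrite rpow L0_poly /rhs -Hbeta. Qed.

Lemma L0_T (p : {poly F}) : L0 (q *: (p \Po (1 + q *: 'X)) - p) = (q - 1) * p`_0 + p`_1.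
Proof.
rewrite L0B L0Z comp_polyE L0_sum mulr_sumr.
rewrite (L0E (leqnn (size p))) -sumrB.
have -> : \sum_(i < size p) (q * L0 (p`_i *: (1 + q *: 'X) ^+ i) - p`_i * beta i)
   = \sum_(i < size p) p`_i * rhs i.
  apply: eq_bigr => i _; rewrite -L0_rpow L0Z; ring.
rewrite (big_ord_widen (size p).+2 (fun i => p`_i * rhs i)) ?leqW //.
rewrite big_mkcond /= big_ord_recl big_ord_recl /= big1.
  case: (ltnP 0 (size p)) => h0; case: (ltnP 1 (size p)) => h1;
    rewrite ?(nth_default _ h0) ?(nth_default _ h1) /rhs /=; ring.
move=> i _; case: ifP => // _; rewrite /bump /rhs /=; ring.
Qed.

End L0.

End Gen2.
Import Gen2.

Module Gen3.
Set Implicit Arguments. Unset Strict Implicit.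

Section Phi.
Variable F : fieldType.
Variable q : F.
Hypothesis hq : forall k, q ^+ k.+1 - 1 != 0.
Hypothesis hq0 : q != 0.

Local Notation qi := (qi q).

Lemma qiS' k : qi k.+1 = 1 + q * qi k.
Proof. rewrite /Gen.qi exprS; have h := hq1 hq; field; exact h. Qed.

Definition phi (j : nat) : {poly F} := \prod_(i < j) ('X - (qi i)%:P).

Lemma phiS j : phi j.+1 = phi j * ('X - (qi j)%:P).
Proof. by rewrite /phi big_ord_recr. Qed.

Lemma phi0 : phi 0 = 1.
Proof. by rewrite /phi big_ord0. Qed.

Lemma phi_comp j : phi j.+1 \Po (1 + q *: 'X) = q ^+ j *: ((1 + q *: 'X) * phi j).
Proof.
elim: j => [|j IH].
  rewrite phiS phi0 mul1r qi0 subr0 comp_polyX expr0 scale1r mulr1 //.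
rewrite phiS comp_polyM IH comp_polyB comp_polyX comp_polyC qiS' phiS.
rewrite -!mul_polyC polyCD polyCM exprS -polyCM; ring.
Qed.

Lemma phi_coef j : (phi j.+1)`_0 = 0 /\ (phi j.+1)`_1 = (-1) ^+ j * qf q j.
Proof.
elim: j => [|j [IH0 IH1]].
  rewrite phiS phi0 mul1r qi0 subr0 !coefX expr0 qf0 mulr1; split => //.
rewrite phiS mulrBr !coefB !coefMX !coefMC /= IH0 IH1 qfS; split.
  by rewrite mul0r subr0.
rewrite exprS; ring.
Qed.

Lemma Tphi j : q *: (phi j.+1 \Po (1 + q *: 'X)) - phi j.+1 =
   (q ^+ j.+2 - 1) *: ('X * phi j) + (q ^+ j.+1 + qi j) *: phi j.
Proof.
rewrite phi_comp phiS -!mul_polyC !exprS !polyCB !polyCD !polyCM; ring.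
Qed.

End Phi.

End Gen3.
Import Gen3.

Module Gen4.
Set Implicit Arguments. Unset Strict Implicit.

Section Base.
Variable F : fieldType.
Variable q : F.
Hypothesis hq : forall k, q ^+ k.+1 - 1 != 0.
Hypothesis hq0 : q != 0.
Variable beta : nat -> F.
Hypothesis Hbeta : forall n : nat,
     q * (\sum_(k < n.+1) 'C(n, k)%:R * q ^+ k * beta k) - beta n
     = (if n == 0%N then q - 1 else if n == 1%N then 1 else 0).

Local Notation qi := (qi q).
Local Notation qf := (qf q).
Local Notation L0 := (L0 beta).
Local Notation phi := (phi q).

Lemma beta0 : beta 0 = 1.
Proof.
have := Hbeta 0; rewrite big_ord1 /= expr0 mulr1 mul1r => h.
have hq1' := hq1 hq.
apply: (mulfI hq1'); rewrite mulr1 -[RHS]h; ring.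
Qed.

Lemma beta1 : beta 1 = - (q + 1)^-1.
Proof.
have := Hbeta 1; rewrite !big_ord_recr big_ord0 /= => h.
have h2 : q + 1 != 0.
  have := hq 1; rewrite expr2 => h3; apply/negP => /eqP h4; move/negP: h3; apply.
  have -> : q * q - 1 = (q - 1) * (q + 1) by ring.
  by rewrite h4 mulr0.
rewrite beta0 in h; apply: (mulfI h2); rewrite mulrN mulfV //.
have hq1' := hq1 hq.
apply: (mulfI hq1'); rewrite !binn expr0 expr1 in h.
move: h; rewrite /= !mulr1 !mul1r add0r => h.
have -> : (q - 1) * ((q + 1) * beta 1) = q * (1 + q * beta 1) - beta 1 - q by ring.
rewrite h; ring.
Qed.

Lemma R1 j : L0 (phi j.+1) = L0 ('X * phi j) - qi j * L0 (phi j).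
Proof.
by rewrite phiS mulrBr L0B [phi j * 'X]mulrC [phi j * _%:P]mulrC mul_polyC L0Z.
Qed.

Lemma R2 j : (q ^+ j.+2 - 1) * L0 ('X * phi j) + (q ^+ j.+1 + qi j) * L0 (phi j)
   = (-1) ^+ j * qf j.
Proof.
have := L0_T Hbeta (phi j.+1); rewrite Tphi // L0D !L0Z => ->.
by have [-> ->] := phi_coef q j; rewrite mulr0 add0r.
Qed.

Definition Aj j := (-1) ^+ j * qf j / qi j.+1.
Definition Bj j := - ((-1) ^+ j * q ^+ j) * qf j ^+ 2 / qf j.+2.

Lemma Id1 j : (q ^+ j.+2 - 1) * Bj j + (q ^+ j.+1 + qi j) * Aj j = (-1) ^+ j * qf j.
Proof.
rewrite /Aj /Bj !qfS /Gen.qi !exprS.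
have h1 := hq1 hq. have h2 := hq j. have h3 := hq j.+1. have hf := qf_neq0 hq j.
rewrite !exprS in h2 h3.
set P := q ^+ j in h2 h3 *; set f := Gen.qf q j in hf *; set s := (-1) ^+ j.
field. rewrite h1 h2 h3 hf //.
Qed.

Lemma Id2 j : Aj j.+1 = Bj j - qi j * Aj j.
Proof.
rewrite /Aj /Bj !qfS /Gen.qi !exprS.
have h1 := hq1 hq. have h2 := hq j. have h3 := hq j.+1. have hf := qf_neq0 hq j.
rewrite !exprS in h2 h3.
set P := q ^+ j in h2 h3 *; set f := Gen.qf q j in hf *; set s := (-1) ^+ j.
field. rewrite h1 h2 h3 hf //.
Qed.

Lemma b_of_a j : L0 (phi j) = Aj j -> L0 ('X * phi j) = Bj j.
Proof.
move=> ha; have := R2 j; rewrite ha -(Id1 j) => /addIr h.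
exact: (mulfI (hq j.+1) h).
Qed.

Lemma a_closed j : L0 (phi j) = Aj j.
Proof.
elim: j => [|j IH].
  by rewrite phi0 L01 beta0 /Aj expr0 mul1r Gen.qf0 (qi1 hq) divr1.
by rewrite R1 (b_of_a IH) IH Id2.
Qed.

Lemma b_closed j : L0 ('X * phi j) = Bj j.
Proof. exact: b_of_a (a_closed j). Qed.

End Base.

End Gen4.
Import Gen4.

Module Gen5.
Set Implicit Arguments. Unset Strict Implicit.

Section Closed.
Variable F : fieldType.
Variable q : F.
Hypothesis hq : forall k, q ^+ k.+1 - 1 != 0.
Hypothesis hq0 : q != 0.

Local Notation qi := (qi q).
Local Notation qf := (qf q).

Definition Kc N := qi 2 * q ^+ 'C(N, 2) * qf N.+1 ^+ 3 / qf (N.*2).+1.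

Definition Ecf N j := if (N <= j)%N then
   Kc N * (- q) ^+ j * qf j ^+ 3 / (qf (j - N) * qf (j + N).+2) else 0.

Lemma KC N : Kc N.+1 = Kc N * q ^+ N * qi N.+2 ^+ 3 / (qi (N.*2).+2 * qi (N.*2).+3).
Proof.
rewrite /Kc binS bin1 exprD doubleS !qfS.
have h1 := qi_neq0 hq (N.*2).+1. have h2 := qi_neq0 hq (N.*2).+2.
have hf := qf_neq0 hq (N.*2).+1.
field; by rewrite ?(qi_neq0 hq) ?(qf_neq0 hq).
Qed.

Lemma EB N m : Ecf N (N + m.+1) =
  Ecf N (N + m) * (- q) * qi (N + m).+1 ^+ 3 / (qi m.+1 * qi (N + m + N).+3).
Proof.
rewrite /Ecf leq_addr leq_addr.
have -> : (N + m.+1 - N = m.+1)%N by lia.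
have -> : (N + m - N = m)%N by lia.
have -> : (N + m.+1 + N).+2 = (N + m + N).+3 by lia.
rewrite addnS !qfS exprS.
have h1 := qi_neq0 hq m. have h2 := qi_neq0 hq (N + m + N).+2.
have hf1 := qf_neq0 hq m. have hf2 := qf_neq0 hq (N + m + N).+2.
field; by rewrite ?(qi_neq0 hq) ?(qf_neq0 hq).
Qed.

Lemma EA N m : Ecf N.+1 (N.+1 + m) =
  Ecf N (N + m.+1) * q ^+ N * qi N.+2 ^+ 3 * qi m.+1 /
     (qi (N.*2).+2 * qi (N.*2).+3 * qi (N + m + N).+4).
Proof.
rewrite /Ecf leq_addr leq_addr KC.
have -> : (N.+1 + m - N.+1 = m)%N by lia.
have -> : (N + m.+1 - N = m.+1)%N by lia.
have -> : (N.+1 + m + N.+1).+2 = (N + m + N).+4 by lia.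
have -> : (N + m.+1 + N).+2 = (N + m + N).+3 by lia.
have -> : (N.+1 + m = N + m.+1)%N by lia.
rewrite !qfS.
have h1 := qi_neq0 hq m. have h2 := qi_neq0 hq (N + m + N).+3.
have h3 := qi_neq0 hq (N.*2).+1. have h4 := qi_neq0 hq (N.*2).+2.
have hf1 := qf_neq0 hq m. have hf2 := qf_neq0 hq (N + m + N).+2.
field; by rewrite ?(qi_neq0 hq) ?(qf_neq0 hq).
Qed.

End Closed.

End Gen5.
Import Gen5.

Module Gen6.
Set Implicit Arguments. Unset Strict Implicit.

Section Poly.
Variable F : fieldType.
Variable q : F.
Hypothesis hq : forall k, q ^+ k.+1 - 1 != 0.
Hypothesis hq0 : q != 0.
Variable beta : nat -> F.
Hypothesis Hbeta : forall n : nat,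
     q * (\sum_(k < n.+1) 'C(n, k)%:R * q ^+ k * beta k) - beta n
     = (if n == 0%N then q - 1 else if n == 1%N then 1 else 0).

Local Notation qi := (qi q).
Local Notation qf := (qf q).
Local Notation c := (cc q).
Local Notation L0 := (L0 beta).
Local Notation phi := (phi q).

Lemma cc_odd n : c (n.*2.+1) =
  q ^+ n.+1 * qi n.+1 ^+ 2 * qi n.+2 / (qi (n.+1).*2 * qi (n.+1).*2.+1).
Proof. by rewrite /cc /= odd_double /= half_double. Qed.

Lemma cc_even n : c (n.*2.+2) =
  - (qi n.+1 * qi n.+2 ^+ 2 / (qi (n.+1).*2.+1 * qi (n.+1).*2.+2)).
Proof. by rewrite /cc /= odd_double /= half_double. Qed.

Fixpoint pr (n : nat) : {poly F} * {poly F} :=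
  match n with
  | 0 => (1, 1)
  | n'.+1 => let p' := 'X * (pr n').2 + (c n'.*2.+1)%:P * (pr n').1 in
             (p', p' + (c n'.*2.+2)%:P * (pr n').2)
  end.

Definition Pp n := (pr n).1.
Definition Rp n := (pr n).2.

Lemma PpS n : Pp n.+1 = 'X * Rp n + (c n.*2.+1)%:P * Pp n.
Proof. by []. Qed.
Lemma RpS n : Rp n.+1 = Pp n.+1 + (c n.*2.+2)%:P * Rp n.
Proof. by []. Qed.
Lemma Pp0 : Pp 0 = 1. Proof. by []. Qed.
Lemma Rp0 : Rp 0 = 1. Proof. by []. Qed.

Lemma Pp1 : Pp 1 = 'X + (c 1)%:P.
Proof. by rewrite PpS Rp0 Pp0 !mulr1. Qed.

Lemma Pp3 n : Pp n.+2 = ('X + (c n.*2.+2 + c n.*2.+3)%:P) * Pp n.+1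
                       - (c n.*2.+1 * c n.*2.+2)%:P * Pp n.
Proof.
have eX : 'X * Rp n = Pp n.+1 - (c n.*2.+1)%:P * Pp n by rewrite PpS addrK.
rewrite PpS RpS.
have -> : (n.+1).*2.+1 = n.*2.+3 by rewrite doubleS.
transitivity ('X * Pp n.+1 + (c n.*2.+2)%:P * ('X * Rp n) + (c n.*2.+3)%:P * Pp n.+1).
  ring.
rewrite eX polyCD polyCM; ring.
Qed.

Definition Lf (p : {poly F}) := L0 ('X * p) / beta 1.

Lemma LfD p r : Lf (p + r) = Lf p + Lf r.
Proof. by rewrite /Lf mulrDr L0D mulrDl. Qed.
Lemma LfZ a p : Lf (a *: p) = a * Lf p.
Proof. by rewrite /Lf -scalerAr L0Z mulrA. Qed.
Lemma LfB p r : Lf (p - r) = Lf p - Lf r.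
Proof. by rewrite /Lf mulrBr L0B mulrBl. Qed.

Definition E n j := Lf (phi j * Pp n).

Lemma Xphi j : 'X * phi j = phi j.+1 + qi j *: phi j.
Proof. rewrite phiS mulrBr -mul_polyC [phi j * _%:P]mulrC [phi j * 'X]mulrC; ring. Qed.

Lemma E_step j b (P : {poly F}) :
  Lf (phi j * (('X + b%:P) * P)) = Lf (phi j.+1 * P) + (qi j + b) * Lf (phi j * P).
Proof.
have -> : phi j * (('X + b%:P) * P) = ('X * phi j) * P + b *: (phi j * P).
  rewrite -mul_polyC; ring.
rewrite Xphi mulrDl LfD LfD -scalerAl !LfZ; ring.
Qed.

Lemma E0 j : E 0 j = Bj q j / beta 1.
Proof. by rewrite /E Pp0 mulr1 /Lf (b_closed hq Hbeta). Qed.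

Lemma E1 j : E 1 j = E 0 j.+1 + (qi j + c 1) * E 0 j.
Proof. by rewrite /E Pp1 -[_ + _]mulr1 E_step Pp0. Qed.

Lemma E2 n j : E n.+2 j = E n.+1 j.+1 + (qi j + (c n.*2.+2 + c n.*2.+3)) * E n.+1 j
   - (c n.*2.+1 * c n.*2.+2) * E n j.
Proof.
rewrite /E Pp3 mulrBr LfB E_step [phi j * (_%:P * _)]mulrCA mul_polyC LfZ //.
Qed.

End Poly.

End Gen6.
Import Gen6.

Module Gen7.
Set Implicit Arguments. Unset Strict Implicit.

Section Ident.
Variable F : fieldType.
Variable q : F.
Hypothesis hq : forall k, q ^+ k.+1 - 1 != 0.
Hypothesis hq0 : q != 0.

Local Notation qi := (qi q).
Local Notation c := (cc q).
Local Notation Ecf := (Ecf q).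

Lemma hqe e : (0 < e)%N -> q ^+ e - 1 != 0.
Proof. by case: e => // e _; apply: hq. Qed.

Ltac side := repeat (apply/andP; split);
  first [ exact (hq1 hq)
        | repeat (rewrite -exprS || rewrite -exprSr || rewrite -exprD || rewrite -expr2); apply: hqe; lia ].

Ltac expand := rewrite /Gen.qi ?doubleS -?addnn; rewrite !(exprS, exprD).

Lemma main_id n m : Ecf n.+2 (n.+2 + m) = Ecf n.+1 (n.+2 + m).+1
   + (qi (n.+2 + m) + (c n.*2.+2 + c n.*2.+3)) * Ecf n.+1 (n.+2 + m)
   - (c n.*2.+1 * c n.*2.+2) * Ecf n (n.+2 + m).
Proof.
rewrite (EA hq hq0 n.+1 m).
have -> : (n.+2 + m).+1 = n.+1 + m.+2 by lia.
have -> : Ecf n.+1 (n.+2 + m) = Ecf n.+1 (n.+1 + m.+1) by congr Ecf; lia.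
have -> : Ecf n (n.+2 + m) = Ecf n (n + m.+2) by congr Ecf; lia.
rewrite (EA hq hq0 n m.+1) (EA hq hq0 n m.+2) (EB hq hq0 n m.+2).
have -> : n.*2.+3 = (n.+1).*2.+1 by rewrite doubleS.
rewrite !cc_odd !cc_even.
set e0 := Ecf n (n + m.+2).
expand.
field.
side.
Qed.

Lemma diag_id n : 0 = Ecf n.+1 n.+1 - (c n.*2.+1 * c n.*2.+2) * Ecf n n.
Proof.
have -> : Ecf n.+1 n.+1 = Ecf n.+1 (n.+1 + 0) by rewrite addn0.
have -> : Ecf n n = Ecf n (n + 0) by rewrite addn0.
rewrite (EA hq hq0 n 0) (EB hq hq0 n 0).
rewrite !cc_odd !cc_even.
set e0 := Ecf n (n + 0).
expand.
field.
side.
Qed.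

Lemma sub_id n : 0 = Ecf n.+1 n.+2
   + (qi n.+1 + (c n.*2.+2 + c n.*2.+3)) * Ecf n.+1 n.+1
   - (c n.*2.+1 * c n.*2.+2) * Ecf n n.+1.
Proof.
have -> : Ecf n.+1 n.+2 = Ecf n.+1 (n.+1 + 1) by rewrite addn1.
have -> : Ecf n.+1 n.+1 = Ecf n.+1 (n.+1 + 0) by rewrite addn0.
have -> : Ecf n n.+1 = Ecf n (n + 0.+1) by rewrite addn1.
rewrite (EA hq hq0 n 1) (EA hq hq0 n 0) (EB hq hq0 n 1) (EB hq hq0 n 0).
have -> : n.*2.+3 = (n.+1).*2.+1 by rewrite doubleS.
rewrite !cc_odd !cc_even.
set e0 := Ecf n (n + 0).
expand.
field.
side.
Qed.

Lemma row1_0 : 0 = Ecf 0 1 + (qi 0 + c 1) * Ecf 0 0.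
Proof.
have -> : Ecf 0 1 = Ecf 0 (0 + 0.+1) by [].
have -> : Ecf 0 0 = Ecf 0 (0 + 0) by [].
rewrite (EB hq hq0 0 0).
have -> : c 1 = c (0.*2.+1) by [].
rewrite !cc_odd.
set e0 := Ecf 0 (0 + 0).
expand.
field.
side.
Qed.

Lemma row1_S m : Ecf 1 m.+1 = Ecf 0 m.+2 + (qi m.+1 + c 1) * Ecf 0 m.+1.
Proof.
have -> : Ecf 1 m.+1 = Ecf 0.+1 (0.+1 + m) by [].
have -> : Ecf 0 m.+2 = Ecf 0 (0 + m.+2) by [].
have -> : Ecf 0 m.+1 = Ecf 0 (0 + m.+1) by [].
rewrite (EA hq hq0 0 m) (EB hq hq0 0 m.+1).
have -> : c 1 = c (0.*2.+1) by [].
rewrite !cc_odd.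
set e0 := Ecf 0 (0 + m.+1).
expand.
field.
side.
Qed.

End Ident.

End Gen7.
Import Gen7.

Module Gen8.
Set Implicit Arguments. Unset Strict Implicit.

Section Final.
Variable F : fieldType.
Variable q : F.
Hypothesis hq : forall k, q ^+ k.+1 - 1 != 0.
Hypothesis hq0 : q != 0.
Variable beta : nat -> F.
Hypothesis Hbeta : forall n : nat,
     q * (\sum_(k < n.+1) 'C(n, k)%:R * q ^+ k * beta k) - beta n
     = (if n == 0%N then q - 1 else if n == 1%N then 1 else 0).

Local Notation qi := (qi q).
Local Notation qf := (qf q).
Local Notation c := (cc q).
Local Notation Ecf := (Ecf q).
Local Notation E := (E q beta).
Local Notation Lf := (Lf beta).
Local Notation phi := (phi q).
Local Notation Pp := (Pp q).
Local Notation Rp := (Rp q).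

Lemma qp1 : q + 1 != 0.
Proof.
have := hq 1; apply: contra => /eqP h.
have -> : q ^+ 2 - 1 = (q - 1) * (q + 1) by rewrite expr2; ring.
by rewrite h mulr0.
Qed.

Lemma row0 j : E 0 j = Ecf 0 j.
Proof.
rewrite E0 // (beta1 hq Hbeta) /Bj /Ecf /= subn0 addn0 /Kc /=.
rewrite [(- q) ^+ j]exprNn.
have -> : qf 0.*2.+1 = qf 1 by [].
have -> : 'C(0, 2) = 0%N by [].
have -> : qf 1 = 1 by rewrite qfS qf0 (qi1 hq) mulr1.
rewrite /Gen.qi !exprS expr0.
have h1 := hq1 hq. have h2 := qp1. have hf1 := qf_neq0 hq j. have hf2 := qf_neq0 hq j.+2.
field.
by rewrite h1 h2 hf1 hf2 oppr_eq0 oner_eq0.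
Qed.

Lemma Ecf_lt N j : (j < N)%N -> Ecf N j = 0.
Proof. by move=> h; rewrite /Gen5.Ecf leqNgt h. Qed.

Lemma row1 j : E 1 j = Ecf 1 j.
Proof.
rewrite E1 !row0.
case: j => [|m].
  by rewrite (Ecf_lt (N:=1)) // (row1_0 hq hq0) qi0.
by rewrite (row1_S hq hq0).
Qed.

Lemma E_closed_pair n : (forall j, E n j = Ecf n j) /\ (forall j, E n.+1 j = Ecf n.+1 j).
Proof.
elim: n => [|n [IH0 IH1]]; first by split; [exact: row0 | exact: row1].
split => // j.
rewrite E2 IH0 !IH1.
case: (ltnP j n) => hjn.
  rewrite !Ecf_lt //; first (by rewrite !mulr0 oppr0 !addr0);
  apply: (leq_trans hjn); lia.
have [k ->] : exists k, j = (n + k)%N by exists (j - n)%N; lia.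
case: k => [|[|k]].
- rewrite addn0 (Ecf_lt (N:=n.+2)) // (Ecf_lt (N:=n.+1) (j:=n)) // mulr0 addr0.
  by rewrite -(diag_id hq hq0 n).
- rewrite addn1 (Ecf_lt (N:=n.+2)) //.
  by rewrite (sub_id hq hq0 n).
- have -> : (n + k.+2)%N = (n.+2 + k)%N by lia.
  by rewrite (main_id hq hq0 n k).
Qed.

Lemma E_closed n j : E n j = Ecf n j.
Proof. by have [h _] := E_closed_pair n; apply: h. Qed.

End Final.

End Gen8.
Import Gen8.

Module Gen9.
Set Implicit Arguments. Unset Strict Implicit.

Section Ortho.
Variable F : fieldType.
Variable q : F.
Hypothesis hq : forall k, q ^+ k.+1 - 1 != 0.
Hypothesis hq0 : q != 0.
Variable beta : nat -> F.
Hypothesis Hbeta : forall n : nat,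
     q * (\sum_(k < n.+1) 'C(n, k)%:R * q ^+ k * beta k) - beta n
     = (if n == 0%N then q - 1 else if n == 1%N then 1 else 0).

Local Notation qi := (qi q).
Local Notation c := (cc q).
Local Notation Ecf := (Ecf q).
Local Notation E := (E q beta).
Local Notation Lf := (Lf beta).
Local Notation phi := (phi q).
Local Notation Pp := (Pp q).
Local Notation Rp := (Rp q).

Lemma phi_monic j : phi j \is monic.
Proof.
elim: j => [|j IH]; first by rewrite phi0 monic1.
by rewrite phiS monicMr ?monicXsubC.
Qed.

Lemma size_phi j : size (phi j) = j.+1.
Proof.
elim: j => [|j IH]; first by rewrite phi0 size_poly1.
rewrite phiS size_Mmonic ?monicXsubC ?monic_neq0 ?phi_monic // IH size_XsubC addn2 //.
Qed.

Lemma phi_lead j : (phi j)`_j = 1.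
Proof.
have := phi_monic j; move/monicP; rewrite lead_coefE size_phi //.
Qed.

Lemma ortho n s (P : {poly F}) : (size P <= s)%N -> (s <= n)%N -> Lf (P * Pp n) = 0.
Proof.
elim: s P => [|s IH] P hP hs.
  by move: hP; rewrite leqn0 size_poly_eq0 => /eqP ->; rewrite mul0r /Lf mulr0 L00 mul0r.
set a := P`_s.
have hQ : (size (P - a *: phi s)%R <= s)%N.
  apply/leq_sizeP => i hi; rewrite coefB coefZ.
  case: (ltngtP s i) => h.
  - rewrite !nth_default ?size_phi ?mulr0 ?subr0 //.
    exact: leq_trans hP h.
  - by move: h hi; clear; lia.
  - by rewrite -h phi_lead mulr1 subrr.
have -> : P = (P - a *: phi s) + a *: phi s by rewrite subrK.
rewrite mulrDl LfD IH ?(ltnW hs) // add0r -scalerAl LfZ.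
have -> : Lf (phi s * Pp n) = E n s by [].
by rewrite (E_closed hq hq0 Hbeta) Ecf_lt // mulr0.
Qed.

End Ortho.

End Gen9.
Import Gen9.

Module Gen10.
Set Implicit Arguments. Unset Strict Implicit.

Section Series.
Variable F : fieldType.
Variable q : F.
Hypothesis hq : forall k, q ^+ k.+1 - 1 != 0.
Hypothesis hq0 : q != 0.
Variable beta : nat -> F.
Hypothesis Hbeta : forall n : nat,
     q * (\sum_(k < n.+1) 'C(n, k)%:R * q ^+ k * beta k) - beta n
     = (if n == 0%N then q - 1 else if n == 1%N then 1 else 0).

Local Notation c := (cc q).
Local Notation Lf := (Lf beta).
Local Notation Pp := (Pp q).
Local Notation Rp := (Rp q).

Definition Sser (k : nat) : series F := fun j =>
  if odd k then Lf ('X^((j + k./2).+1) * Rp k./2) else Lf ('X^(j + k./2) * Pp k./2).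

Lemma S_even n j : Sser n.*2 j = Lf ('X^(j + n) * Pp n).
Proof. by rewrite /Sser odd_double half_double. Qed.

Lemma S_odd n j : Sser n.*2.+1 j = Lf ('X^((j + n).+1) * Rp n).
Proof. by rewrite /Sser /= odd_double /= uphalf_double. Qed.

Lemma LfC a p : Lf (a%:P * p) = a * Lf p.
Proof. by rewrite mul_polyC LfZ. Qed.

Lemma Xn_mul n (p : {poly F}) : 'X^(n.+1) * p = 'X^n * ('X * p).
Proof. by rewrite exprSr mulrA. Qed.

Lemma parity k : exists n, k = n.*2 \/ k = n.*2.+1.
Proof.
exists k./2; have := odd_double_half k; case: (odd k) => /= h; [right|left]; lia.
Qed.

Lemma Lf_Xn j : Lf ('X^j) = beta j.+1 / beta 1.
Proof. by rewrite /Lf -exprS L0Xn. Qed.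

Lemma HS0 j : Sser 0 j = beta j.+1 / beta 1.
Proof. by rewrite (S_even 0) addn0 Pp0 mulr1 Lf_Xn. Qed.

Lemma HS1 j : Sser 1 j = beta j.+2 / beta 1.
Proof. by rewrite (S_odd 0) addn0 Rp0 mulr1 Lf_Xn. Qed.

Lemma Hf0 : beta 1 / beta 1 = 1.
Proof. rewrite mulfV // (beta1 hq Hbeta) oppr_eq0 invr_eq0; exact: qp1. Qed.

Lemma HSrec k j : Sser k.+2 j = Sser k.+1 j.+1 + c k.+1 * Sser k j.+1.
Proof.
have [n [->|->]] := parity k.
- rewrite -doubleS S_even S_odd S_even PpS mulrDr LfD -LfC.
  have -> : (j + n.+1 = (j.+1 + n))%N by lia.
  congr (_ + _); first by rewrite mulrCA mulrA -exprS.
  by rewrite mulrCA.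
- have -> : n.*2.+3 = (n.+1).*2.+1 by rewrite doubleS.
  have -> : n.*2.+2 = (n.+1).*2 by rewrite doubleS.
  rewrite S_odd S_even S_odd RpS mulrDr LfD -LfC.
  have -> : (j.+1 + n.+1 = (j + n.+1).+1)%N by lia.
  have -> : ((j.+1 + n).+1 = (j + n.+1).+1)%N by lia.
  by rewrite mulrCA doubleS.
Qed.

Lemma HSc k : Sser k.+1 0 + c k.+1 * Sser k 0 = 0.
Proof.
have [n [->|->]] := parity k.
- rewrite S_odd S_even !add0n -LfC mulrCA -LfD Xn_mul -mulrDr -PpS.
  apply: (ortho hq hq0 Hbeta (s := n.+1)) => //.
  by rewrite size_polyXn.
- have -> : n.*2.+2 = (n.+1).*2 by rewrite doubleS.
  rewrite S_odd S_even !add0n -LfC doubleS [_%:P * _]mulrCA -LfD -mulrDr -RpS.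
  rewrite Xn_mul.
  have e : 'X * Rp n.+1 = Pp n.+2 - (c (n.+1).*2.+1)%:P * Pp n.+1 by rewrite PpS addrK.
  rewrite e mulrBr LfB mulrCA LfC.
  rewrite (ortho hq hq0 Hbeta (s := n.+1)) ?size_polyXn //.
  rewrite (ortho hq hq0 Hbeta (s := n.+1)) ?size_polyXn //.
  by rewrite mulr0 subr0.
Qed.

Theorem main_gen : cf_expands c (fun n => beta n.+1 / beta 1).
Proof.
apply: (@cf_expands_S F c _ Sser).
- by move=> j; rewrite HS0.
- by move=> j; rewrite HS1.
- exact: Hf0.
- exact: HSrec.
- exact: HSc.
Qed.

End Series.

End Gen10.
Import Gen10.

Lemma qv_neq0 : qv != 0.
Proof. by rewrite /qv tofrac_eq0 polyX_eq0. Qed.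

Lemma qpow1 k : qv ^+ k.+1 - 1 != 0.
Proof.
rewrite subr_eq0 /qv -tofracXn -tofrac1 tofrac_eq.
apply/eqP => h; have := congr1 (fun p : {poly rat} => size p) h; rewrite /=.
by rewrite size_polyXn size_poly1.
Qed.


Theorem mainTheorem9 (beta : nat -> Qq)
  (Hbeta : forall n : nat,
     qv * (\sum_(k < n.+1) 'C(n, k)%:R * qv ^+ k * beta k) - beta n
     = (if n == 0%N then qv - 1 else if n == 1%N then 1 else 0)) :
  cf_expands cf_coef (fun n => beta n.+1 / beta 1%N).
Proof.
exact: (main_gen qpow1 qv_neq0 Hbeta).
Qed.
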